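(* Let $n,m\ge 0$ and let $\lambda$ be a partition with $n+m$ parts. Then $$G_{\lambda}(z_1,\dots,z_n,w_1,\dots,w_m;\beta)=\sum_{\nu}G_{\lambda/\nu}(z_1,\dots,z_n;\beta)\,G_\nu(w_1,\dots,w_m;\beta),$$ the sum running over all partitions $\nu$ with $m$ parts. At $\beta=0$ this reduces to the corresponding identity for Schur and skew Schur polynomials.
   Context: A ''partition with $N$ parts'' means a weakly decreasing sequence of $N$ nonnegative integers (zeros allowed); $|\lambda|=\sum_j\lambda_j$. The Grothendieck polynomial is $G_\lambda(z_1,\dots,z_N;\beta)=\det_{1\le j,k\le N}\big(z_j^{\lambda_k+N-k}(1+\beta z_j)^{k-1}\big)/\prod_{1\le j<k\le N}(z_j-z_k)$ ($=1$ for $N=0$). For $\mu$ with $k+1$ parts and $\lambda$ with $k$ parts, $\mu\succ\lambda$ iff $\mu_j\ge\lambda_j\ge\mu_{j+1}$ ($1\le j\le k$). Single-variable skew Grothendieck polynomial: $G_{\mu/\lambda}(z;\beta)=z^{|\mu|-|\lambda|}\prod_{j=1}^k(1+\beta z-\beta z\,\delta_{\mu_{j+1},\lambda_j})$ if $\mu\succ\lambda$, and $0$ otherwise. Multivariable skew Grothendieck polynomial: for $\lambda$ with $n+m$ parts and $\nu$ with $m$ parts, $$G_{\lambda/\nu}(z_1,\dots,z_n;\beta)=\sum_{\lambda^{(1)},\dots,\lambda^{(n-1)}}\prod_{j=1}^nG_{\lambda^{(j-1)}/\lambda^{(j)}}(z_j;\beta),$$ where $\lambda^{(0)}=\lambda$,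 $\lambda^{(n)}=\nu$, and $\lambda^{(j)}$ ranges over partitions with $n+m-j$ parts (the nonzero terms are those with $\lambda^{(0)}\succ\lambda^{(1)}\succ\cdots\succ\lambda^{(n)}$). *)

(* Defs.v *)
From HB Require Import structures.
From mathcomp Require Import all_boot all_order all_algebra.
Set Implicit Arguments. Unset Strict Implicit. Unset Printing Implicit Defensive.
Import Order.TTheory GRing.Theory Num.Theory.
Local Open Scope ring_scope.

Definition is_partition (N : nat) (l : seq nat) : bool :=
  (size l == N) && sorted geq l.

Fixpoint all_seqs (N b : nat) : seq (seq nat) :=
  match N with
  | 0 => [:: [::]]
  | N'.+1 => flatten [seq [seq i :: s | s <- all_seqs N' b] | i <- iota 0 b.+1]
  end.

Definition bounded_parts (N b : nat) : seq (seq nat) :=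
  [seq l <- all_seqs N b | sorted geq l].

Section Groth.
Variable F : fieldType.

Definition groth (lam : seq nat) (zs : seq F) (beta : F) : F :=
  let N := size zs in
  \det (\matrix_(j < N, k < N)
          (zs`_j ^+ (nth 0%N lam k + N - k.+1) * (1 + beta * zs`_j) ^+ k))
  / \prod_(j < N) \prod_(k < N | (j < k)%N) (zs`_j - zs`_k).

Definition interlace (mu lam : seq nat) : bool :=
  (size mu == (size lam).+1) &&
  [forall j : 'I_(size lam),
     (nth 0%N lam j <= nth 0%N mu j)%N && (nth 0%N mu j.+1 <= nth 0%N lam j)%N].

Definition groth1 (mu lam : seq nat) (z beta : F) : F :=
  if interlace mu lam then
    z ^+ (sumn mu - sumn lam) *
    \prod_(j < size lam)
       (1 + beta * z - beta * z * (nth 0%N mu j.+1 == nth 0%N lam j)%:R)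
  else 0.

(* Only mu with mu_j <= lam_1 can give
   nonzero terms (interlacing), so the sum is restricted to those. *)
Fixpoint skew_groth (lam nu : seq nat) (zs : seq F) (beta : F) : F :=
  match zs with
  | [::] => (lam == nu)%:R
  | z :: zs' =>
      \sum_(mu <- bounded_parts (size lam).-1 (head 0%N lam))
         groth1 lam mu z beta * skew_groth mu nu zs' beta
  end.

End Groth.

(* Main.v *)
Require Import Defs.
From HB Require Import structures.
From mathcomp Require Import all_boot all_order all_algebra.
From mathcomp Require Import ring zify.
Import Order.TTheory GRing.Theory Num.Theory.
Set Implicit Arguments. Unset Strict Implicit. Unset Printing Implicit Defensive.

Lemma all_seqsS N b : all_seqs N.+1 b =
  flatten [seq [seq i :: s | s <- all_seqs N b] | i <- iota 0 b.+1].
Proof. by []. Qed.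

Lemma mem_all_seqs N b s :
  (s \in all_seqs N b) = (size s == N) && all (fun x => x <= b) s.
Proof.
elim: N s => [|N IH] s.
  by case: s.
rewrite all_seqsS; case: s => [|x s].
  by apply/flatten_mapP => -[i _] /mapP [t _].
apply/flatten_mapP/idP.
- move=> [i]; rewrite mem_iota add0n => /andP[_ hi] /mapP [t ht [-> ->]].
  by move: ht; rewrite IH /= -ltnS hi eqSS => /andP[-> ->].
- move=> /andP [hs /andP[hx ha]]; exists x; first by rewrite mem_iota.
  by apply/mapP; exists s => //; rewrite IH -eqSS hs.
Qed.

Lemma uniq_all_seqs N b : uniq (all_seqs N b).
Proof.
elim: N => [|N IH] //; rewrite all_seqsS.
apply: allpairs_uniq => //.
- exact: iota_uniq.
- by move=> [i s] [j t] _ _ /= [-> ->].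
Qed.

Lemma mem_bounded_parts N b s :
  (s \in bounded_parts N b) = [&& size s == N, all (fun x => x <= b) s & sorted geq s].
Proof. by rewrite mem_filter mem_all_seqs andbC andbA. Qed.

Lemma uniq_bounded_parts N b : uniq (bounded_parts N b).
Proof. exact/filter_uniq/uniq_all_seqs. Qed.

Local Open Scope ring_scope.

Section Gen.
Variable R : comRingType.

Lemma geo (z w beta : R) b p d :
 (w - z) * \sum_(u < d.+1) (z ^+ (d - u) * (1 + beta*z - beta*z*((u:nat) == 0%N)%:R) * w ^+ (b + u + p))
 = (1 + beta*z) * w ^+ (b + d + 1 + p) - z ^+ d.+1 * w ^+ (b + p) * (1 + beta * w).
Proof.
elim: d => [|d IH].
  rewrite big_ord1 /= subnn expr0 addn0 addnAC addn1 exprS; ring.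
rewrite big_ord_recr /=.
have -> : \sum_(i < d.+1) z ^+ (d.+1 - widen_ord (leqnSn d.+1) i) *
        (1 + beta * z - beta * z * ((widen_ord (leqnSn d.+1) i : nat) == 0%N)%:R) *
        w ^+ (b + widen_ord (leqnSn d.+1) i + p)
   = z * \sum_(u < d.+1) (z ^+ (d - u) * (1 + beta*z - beta*z*((u:nat) == 0%N)%:R) * w ^+ (b + u + p)).
  rewrite big_distrr; apply: eq_bigr => i _ /=.
  by rewrite subSn ?exprS ?mulrA // -ltnS.
rewrite mulrDr mulrCA IH subnn expr0 /=.
have -> : (b + d.+1 + 1 + p = (b + d + p).+2)%N by lia.
have -> : (b + d.+1 + p = (b + d + p).+1)%N by lia.
have -> : (b + d + 1 + p = (b + d + p).+1)%N by lia.
rewrite !exprS; ring.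
Qed.

End Gen.

Local Open Scope ring_scope.

Section Gen.
Variable R : comRingType.

Lemma det_multilin m T (phi : 'I_m -> 'I_T -> R) (E : 'I_m -> 'I_T -> 'I_m -> R) :
  \det (\matrix_(k < m, i < m) \sum_(t < T) phi k t * E k t i)
  = \sum_(c : {ffun 'I_m -> 'I_T}) (\prod_k phi k (c k)) * \det (\matrix_(k < m, i < m) E k (c k) i).
Proof.
rewrite /determinant.
under eq_bigr => s _ do under eq_bigr => k _ do rewrite !mxE.
under eq_bigr => s _ do rewrite bigA_distr_bigA big_distrr.
rewrite exchange_big; apply: eq_bigr => c _.
rewrite big_distrr; apply: eq_bigr => s _.
rewrite /= big_split /= mulrCA; congr (_ * (_ * _)); apply: eq_bigr => k _.
by rewrite !mxE.
Qed.

End Gen.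

Local Open Scope ring_scope.

Section Gen.
Variable R : comRingType.

Lemma sum_window (F : nat -> R) a d N : (a + d < N)%N ->
  \sum_(t < N) (if (a <= t <= a + d)%N then F t else 0) = \sum_(u < d.+1) F (a + u)%N.
Proof.
move=> hN.
rewrite -(big_mkord xpredT (fun t => if (a <= t <= a + d)%N then F t else 0)).
rewrite (@big_cat_nat _ _ _ a 0 N) //=; last by lia.
rewrite (@big_cat_nat _ _ _ (a + d.+1) a N) //=; try lia.
have h1 : \sum_(0 <= i < a) (if (a <= i <= a + d)%N then F i else 0) = 0.
  rewrite big_nat_cond big1 // => t /andP[/andP[_ ht] _].
  by rewrite leqNgt ht.
have h3 : \sum_(a + d.+1 <= i < N) (if (a <= i <= a + d)%N then F i else 0) = 0.
  rewrite big_nat_cond big1 // => t /andP[/andP[ht _] _].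
  have -> : (t <= a + d)%N = false by apply/negP => ht'; move: ht; rewrite addnS ltnNge ht'.
  by rewrite andbF.
rewrite h1 h3 add0r addr0 -{1}[a]add0n big_addn.
rewrite -(big_mkord xpredT (fun u => F (a + u)%N)).
have -> : (a + d.+1 - a = d.+1)%N by rewrite addKn.
apply: eq_big_nat => u /andP[_ hu]; rewrite leq_addl addnC leq_add2l -ltnS hu.
by [].
Qed.

Lemma sum_delta n (F : nat -> R) k :
  \sum_(i < n) (((i:nat) == k)%:R * F i) = (if (k < n)%N then F k else 0).
Proof.
rewrite -(big_mkord xpredT (fun i => ((i:nat) == k)%:R * F i)).
case: ifP => hk.
  rewrite (bigD1_seq k) ?mem_iota ?iota_uniq //=; last by rewrite add0n subn0.
  have -> : (k == k) = true by apply/eqP.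
  rewrite mul1r big1 ?addr0 // => i /negbTE ->; by rewrite mul0r.
rewrite big1_seq // => i; rewrite mem_iota => /andP[_ hi].
have -> : (i == k) = false by apply/negP => /eqP ei; move: hi; rewrite ei add0n subn0 hk.
by rewrite mul0r.
Qed.

End Gen.

Local Open Scope ring_scope.

Definition fseq m T (c : {ffun 'I_m -> 'I_T}) : seq nat := [seq (c k : nat) | k <- enum 'I_m].

Lemma size_fseq m T (c : {ffun 'I_m -> 'I_T}) : size (fseq c) = m.
Proof. by rewrite size_map size_enum_ord. Qed.

Lemma nth_fseq m T (c : {ffun 'I_m -> 'I_T}) (k : 'I_m) : nth 0%N (fseq c) k = c k.
Proof.
rewrite /fseq (nth_map k) ?size_enum_ord //; congr (nat_of_ord (c _)).
by apply: val_inj; rewrite /= nth_enum_ord.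
Qed.

Lemma perm_fseq m b :
  perm_eq [seq fseq c | c <- index_enum {ffun 'I_m -> 'I_b.+1}] (all_seqs m b).
Proof.
apply: uniq_perm.
- rewrite map_inj_uniq ?index_enum_uniq // => c1 c2 e.
  apply/ffunP => k; apply: val_inj; by move: (congr1 (fun s => nth 0%N s k) e); rewrite /= !nth_fseq.
- exact: uniq_all_seqs.
move=> s; rewrite mem_all_seqs; apply/mapP/idP.
- move=> [c _ ->]; rewrite size_fseq eqxx /=; apply/allP => x /mapP [k _ ->].
  by rewrite -ltnS.
- move=> /andP[/eqP hs ha].
  exists [ffun k : 'I_m => (inord (nth 0%N s k) : 'I_b.+1)]; first by rewrite mem_index_enum.
  apply: (@eq_from_nth _ 0%N); first by rewrite size_fseq.
  move=> i; rewrite hs => hi.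
  rewrite (nth_fseq _ (Ordinal hi)) ffunE inordK //= ltnS.
  by apply: (allP ha); rewrite mem_nth // hs.
Qed.

Section Gen.
Variable R : comRingType.

Lemma ffun_sum_seqs (G : seq nat -> R) m b :
  \sum_(c : {ffun 'I_m -> 'I_b.+1}) G (fseq c) = \sum_(s <- all_seqs m b) G s.
Proof.
rewrite -(perm_big _ (perm_fseq m b)) big_map.
by [].
Qed.

End Gen.

Local Open Scope ring_scope.

Section Gen.
Variable R : comRingType.

Definition g1 (mu lam : seq nat) (z beta : R) : R :=
  if interlace mu lam then
    z ^+ (sumn mu - sumn lam) *
    \prod_(j < size lam)
       (1 + beta * z - beta * z * (nth 0%N mu j.+1 == nth 0%N lam j)%:R)
  else 0.

Definition ph (lam : seq nat) (z beta : R) (k t : nat) : R :=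
  if (nth 0%N lam k.+1 <= t <= nth 0%N lam k)%N then
    z ^+ (nth 0%N lam k - t) * (1 + beta * z - beta * z * (nth 0%N lam k.+1 == t)%:R)
  else 0.

Lemma sumn_ord s : sumn s = (\sum_(i < size s) nth 0%N s i)%N.
Proof. by rewrite sumnE (big_nth 0%N) big_mkord. Qed.

Lemma g1_prod m lam mu (z beta : R) : size lam = m.+1 -> size mu = m ->
  g1 lam mu z beta = z ^+ (nth 0%N lam m) * \prod_(k < m) ph lam z beta k (nth 0%N mu k).
Proof.
move=> hl hm; rewrite /g1 /interlace hl hm eqxx /=.
case: (boolP [forall j : 'I_m, _]) => [/forallP H | /forallPn [k Hk]].
- under [in RHS]eq_bigr => k _ do rewrite /ph andbC (H k).
  rewrite big_split /= prodrXr mulrA -exprD; congr (_ ^+ _ * _).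
  rewrite (sumn_ord lam) (sumn_ord mu) hl hm big_ord_recr /=.
  have hs : (\sum_(k < m) (nth 0%N lam k - nth 0%N mu k) + \sum_(k < m) nth 0%N mu k
     = \sum_(k < m) nth 0%N lam k)%N.
    rewrite -big_split; apply: eq_bigr => k _ /=; rewrite subnK //.
    by case/andP: (H k).
  by rewrite -hs; change (nat_of_ord (@ord_max m)) with m; rewrite addnAC addnK addnC.
- rewrite (bigD1 k) //= /ph andbC (negbTE Hk) mul0r mulr0.
  by [].
Qed.

End Gen.

Local Open Scope ring_scope.

Lemma interlace_sorted lam mu : interlace lam mu -> sorted geq mu.
Proof.
case/andP=> _ /forallP H; apply/(sortedP 0%N) => i hi.
have hi' : (i < size mu)%N by apply: ltnW.
case/andP: (H (Ordinal hi)) => /= h1 _.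
case/andP: (H (Ordinal hi')) => /= _ h2.
exact: leq_trans h1 h2.
Qed.

Section Gen.
Variable R : comRingType.

Definition amxn (N : nat) (lam : seq nat) (xs : seq R) (beta : R) : 'M[R]_N :=
  \matrix_(j < N, k < N) (xs`_j ^+ (nth 0%N lam k + N - k.+1) * (1 + beta * xs`_j) ^+ k).

Lemma step1 m lam (z beta : R) (w : seq R) : size lam = m.+1 ->
 \sum_(mu <- bounded_parts m (head 0%N lam)) g1 lam mu z beta * \det (amxn m mu w beta)
 = z ^+ (nth 0%N lam m) * \det (\matrix_(i < m, k < m) \sum_(t < (head 0%N lam).+1)
      ph lam z beta k t * (w`_i ^+ (t + m - k.+1) * (1 + beta * w`_i) ^+ k)).
Proof.
move=> hl; set b := head 0%N lam.
rewrite -det_tr.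
set E := fun (k : 'I_m) (t : 'I_b.+1) (i : 'I_m) => w`_i ^+ (t + m - k.+1) * (1 + beta * w`_i) ^+ k.
have -> : (\matrix_(i < m, k < m) \sum_(t < b.+1)
      ph lam z beta k t * (w`_i ^+ (t + m - k.+1) * (1 + beta * w`_i) ^+ k))^T
  = \matrix_(k < m, i < m) \sum_(t < b.+1) ph lam z beta k t * E k t i.
  by apply/matrixP => k i; rewrite !mxE.
rewrite (det_multilin (fun k (t : 'I_b.+1) => ph lam z beta k t)) big_distrr /=.
rewrite big_filter big_mkcond /= -(ffun_sum_seqs _ m b); apply: eq_bigr => c _.
have hg : g1 lam (fseq c) z beta = z ^+ nth 0%N lam m * \prod_(k < m) ph lam z beta k (c k).
  rewrite (g1_prod _ _ hl (size_fseq c)); congr (_ * _).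
  by apply: eq_bigr => k _; rewrite nth_fseq.
have hd : \det (amxn m (fseq c) w beta) = \det (\matrix_(k < m, i < m) E k (c k) i).
  rewrite -det_tr; congr (\det _); apply/matrixP => k i; rewrite !mxE nth_fseq.
  by [].
case: ifP => hs.
  by rewrite hg hd mulrA.
rewrite mulrA.
have -> : z ^+ nth 0%N lam m * \prod_(k < m) ph lam z beta k (c k) = 0.
  rewrite -hg /g1; case: ifP => // /interlace_sorted; by rewrite hs.
by rewrite mul0r.
Qed.

End Gen.

Local Open Scope ring_scope.

Section Gen.
Variable R : comRingType.

Lemma Bentry m lam (z beta w : R) (k : nat) :
  (k < m)%N -> (nth 0%N lam k.+1 <= nth 0%N lam k <= head 0%N lam)%N ->
  (w - z) * \sum_(t < (head 0%N lam).+1)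
      ph lam z beta k t * (w ^+ (t + m - k.+1) * (1 + beta * w) ^+ k)
  = w ^+ (nth 0%N lam k + m.+1 - k.+1) * (1 + beta * w) ^+ k * (1 + beta * z)
    + w ^+ (nth 0%N lam k.+1 + m.+1 - k.+2) * (1 + beta * w) ^+ k.+1
      * - z ^+ (nth 0%N lam k - nth 0%N lam k.+1).+1.
Proof.
move=> hk /andP[h1 h2].
set a := nth 0%N lam k.+1; set d := (nth 0%N lam k - a)%N.
have hd : nth 0%N lam k = (a + d)%N by rewrite subnKC.
set p := (m - k.+1)%N.
have -> : \sum_(t < (head 0%N lam).+1)
      ph lam z beta k t * (w ^+ (t + m - k.+1) * (1 + beta * w) ^+ k)
   = \sum_(t < (head 0%N lam).+1) (if (a <= t <= a + d)%N then
      z ^+ (nth 0%N lam k - t) * (1 + beta * z - beta * z * (a == t)%:R)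
        * (w ^+ (t + m - k.+1) * (1 + beta * w) ^+ k) else 0).
  apply: eq_bigr => t _; rewrite /ph -/a -hd.
  by case: ifP => _ //; rewrite mul0r.
rewrite (@sum_window _ (fun t : nat => z ^+ (nth 0%N lam k - t) * (1 + beta * z - beta * z * (a == t)%:R)
        * (w ^+ (t + m - k.+1) * (1 + beta * w) ^+ k)) a d); last by rewrite -hd ltnS.
have -> : \sum_(u < d.+1)
    z ^+ (nth 0%N lam k - (a + u)) * (1 + beta * z - beta * z * (a == a + u)%N%:R) *
    (w ^+ (a + u + m - k.+1) * (1 + beta * w) ^+ k)
  = (\sum_(u < d.+1) (z ^+ (d - u) * (1 + beta*z - beta*z*((u:nat) == 0%N)%:R) * w ^+ (a + u + p)))
     * (1 + beta * w) ^+ k.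
  rewrite big_distrl; apply: eq_bigr => u _ /=.
  have -> : (nth 0%N lam k - (a + u) = d - u)%N by rewrite hd subnDA addKn.
  have -> : (a == a + u) = ((u:nat) == 0%N) by rewrite -{1}[a]addn0 eqn_add2l eq_sym.
  have -> : (a + u + m - k.+1 = a + u + p)%N by rewrite /p addnBA.
  by rewrite !mulrA.
rewrite mulrA geo.
have -> : (nth 0%N lam k + m.+1 - k.+1 = a + d + 1 + p)%N by rewrite hd /p; lia.
have -> : (nth 0%N lam k.+1 + m.+1 - k.+2 = a + p)%N by rewrite /p -/a; lia.
rewrite -/a exprS [(1 + beta * w) ^+ k.+1]exprS; ring.
Qed.

End Gen.

Local Open Scope ring_scope.

Lemma sorted_geq_nth s i j : sorted geq s -> (i <= j < size s)%N -> (nth 0%N s j <= nth 0%N s i)%N.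
Proof.
move=> hs /andP[hij hj].
have hi : (i < size s)%N by apply: leq_ltn_trans hj.
have tr : transitive geq by move=> a b c h1 h2; apply: leq_trans h2 h1.
by apply: (sorted_leq_nth tr (fun x => leqnn x) 0%N hs); rewrite ?inE.
Qed.

Lemma nSn (n : nat) : (n == n.+1) = false. Proof. by elim: n. Qed.

Section Gen.
Variable R : comRingType.

Lemma prod_neg m (f : 'I_m -> R) (z : R) :
  \prod_(i < m) (f i - z) = (-1) ^+ m * \prod_(i < m) (z - f i).
Proof.
rewrite -[X in (-1) ^+ X](card_ord m) -prodr_const -big_split /=.
by apply: eq_bigr => i _; rewrite mulN1r opprB.
Qed.

Lemma core m lam (z beta : R) (w : seq R) :
  size lam = m.+1 -> sorted geq lam -> size w = m ->
  (1 + beta * z) ^+ m * \det (amxn m.+1 lam (z :: w) beta)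
  = (1 + beta * z) ^+ m * (\prod_(i < m) (z - w`_i) *
      \sum_(mu <- bounded_parts m (head 0%N lam)) g1 lam mu z beta * \det (amxn m mu w beta)).
Proof.
move=> hl hs hw.
have hsrt : forall k, (k < m)%N -> (nth 0%N lam k.+1 <= nth 0%N lam k <= head 0%N lam)%N.
  move=> k hk; rewrite -nth0 !sorted_geq_nth // ?hl //; lia.
set xs := z :: w.
set a := fun j k : nat => xs`_j ^+ (nth 0%N lam k + m.+1 - k.+1) * (1 + beta * xs`_j) ^+ k.
set dk := fun k : nat => (nth 0%N lam k - nth 0%N lam k.+1).+1%N.
pose U : 'M[R]_m.+1 := \matrix_(i < m.+1, k < m.+1)
  (((i:nat) == k)%:R * (if (k < m)%N then 1 + beta * z else 1)
   + ((i:nat) == k.+1)%:R * - z ^+ dk k).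
have hU : \det U = (1 + beta * z) ^+ m.
  rewrite det_trig; last first.
    apply/is_trig_mxP => i k hik; rewrite mxE.
    have -> : ((i:nat) == k) = false by apply/negP => /eqP e; move: hik; rewrite e ltnn.
    have -> : ((i:nat) == k.+1) = false by apply/negP => /eqP e; move: hik; rewrite e; lia.
    by rewrite !mul0r addr0.
  rewrite big_ord_recr /= mxE eqxx ltnn mul1r.
  rewrite nSn.
  rewrite mul0r addr0 mulr1 -[in RHS](card_ord m) -prodr_const.
  apply: eq_bigr => i _; rewrite mxE eqxx mul1r /= ltn_ord.
  rewrite nSn.
  by rewrite mul0r addr0.
set A := amxn m.+1 lam xs beta.
have hC : forall j k : 'I_m.+1, (A *m U) j k =
    a j k * (if (k < m)%N then 1 + beta * z else 1)
    + (if (k.+1 < m.+1)%N then a j k.+1 * - z ^+ dk k else 0).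
  move=> j k; rewrite mxE.
  rewrite (eq_bigr (fun i : 'I_m.+1 => ((i:nat) == k)%:R * (a j i * (if (k < m)%N then 1 + beta * z else 1))
      + ((i:nat) == k.+1)%:R * (a j i * - z ^+ dk k))); last first.
    by move=> i _; rewrite !mxE /a; ring.
  rewrite big_split /= (sum_delta _ (fun i => a j i * (if (k < m)%N then 1 + beta * z else 1))).
  rewrite (sum_delta _ (fun i => a j i * - z ^+ dk k)) ltn_ord.
  by [].
have hdetC : \det (A *m U) = (1 + beta * z) ^+ m * \det A by rewrite det_mulmx hU mulrC.
rewrite -hdetC (expand_det_row _ ord0) big_ord_recr /= big1 ?add0r; last first.
  move=> k _; rewrite hC /= ltn_ord ltnS ltn_ord.
  have hk := ltn_ord k; have := hsrt k hk => /andP[h1 h2].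
  suff -> : a 0%N k * (1 + beta * z) + a 0%N k.+1 * - z ^+ dk k = 0 by rewrite mul0r.
  rewrite /a /=.
  have -> : (nth 0%N lam k + m.+1 - k.+1 = dk k + (nth 0%N lam k.+1 + m.+1 - k.+2))%N.
    rewrite /dk; lia.
  rewrite exprD [(1 + beta * z) ^+ k.+1]exprS; ring.
rewrite hC /= ltnn ltnn mulr1 addr0.
rewrite /cofactor.
set Bm := \matrix_(i < m, k < m) \sum_(t < (head 0%N lam).+1)
      ph lam z beta k t * (w`_i ^+ (t + m - k.+1) * (1 + beta * w`_i) ^+ k).
have hM : row' ord0 (col' ord_max (A *m U)) = diag_mx (\row_i (w`_i - z)) *m Bm.
  apply/matrixP => i k; rewrite mul_diag_mx [LHS]mxE [LHS]mxE hC.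
  have -> : (lift ord_max k : nat) = k by rewrite /= /bump leqNgt ltn_ord.
  have -> : (lift ord0 i : nat) = i.+1 by [].
  rewrite ltn_ord ltnS ltn_ord !mxE Bentry //; last exact: hsrt.
rewrite hM det_mulmx det_diag (step1 _ _ _ hl) -/Bm.
under eq_bigr => i _ do rewrite mxE.
rewrite (prod_neg (fun i : 'I_m => w`_i)) /a /= add0n addnK.
have hs2 : (-1) ^+ m * (-1) ^+ m = 1 :> R by rewrite -exprMn mulrNN mulr1 expr1n.
have -> : (-1) ^+ m * ((-1) ^+ m * \prod_(i < m) (z - w`_i) * \det Bm)
    = \prod_(i < m) (z - w`_i) * \det Bm :> R by rewrite !mulrA hs2 mul1r.
ring.
Qed.

End Gen.

Local Open Scope ring_scope.

Section Map.
Variables (R S : comRingType) (f : {rmorphism R -> S}).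

Lemma nth_rmorph (xs : seq R) j : (map f xs)`_j = f xs`_j.
Proof.
case: (ltnP j (size xs)) => hj; first by rewrite (nth_map 0).
by rewrite !nth_default ?size_map // rmorph0.
Qed.

Lemma amxn_map N lam xs beta :
  map_mx f (amxn N lam xs beta) = amxn N lam (map f xs) (f beta).
Proof.
apply/matrixP => j k; rewrite !mxE nth_rmorph.
by rewrite rmorphM !rmorphXn rmorphD rmorph1 rmorphM.
Qed.

Lemma g1_map lam mu (z beta : R) : f (g1 lam mu z beta) = g1 lam mu (f z) (f beta).
Proof.
rewrite /g1; case: ifP => _; last exact: rmorph0.
rewrite rmorphM rmorphXn rmorph_prod; congr (_ * _); apply: eq_bigr => j _.
by rewrite !rmorphB rmorphD rmorph1 !rmorphM rmorph_nat.
Qed.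

End Map.

Lemma core_field (K : fieldType) m lam (z beta : K) (w : seq K) :
  size lam = m.+1 -> sorted geq lam -> size w = m ->
  \det (amxn m.+1 lam (z :: w) beta)
  = \prod_(i < m) (z - w`_i) *
      \sum_(mu <- bounded_parts m (head 0%N lam)) g1 lam mu z beta * \det (amxn m mu w beta).
Proof.
move=> hl hs hw.
have hw' : size (map polyC w) = m by rewrite size_map.
have := core 'X (beta%:P) hl hs hw'.
have nz : (1 + beta%:P * 'X : {poly K}) ^+ m != 0.
  apply: expf_neq0; apply/negP => /eqP e.
  have := congr1 (horner_eval 0) e; rewrite /= !horner_evalE hornerD hornerM hornerX.
  by rewrite hornerC horner0 mulr0 addr0 => /eqP; rewrite oner_eq0.
move/(mulfI nz) => /(congr1 (horner_eval z)).
rewrite -det_map_mx amxn_map rmorphM rmorph_prod rmorph_sum /=.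
have hw2 : [seq horner_eval z i | i <- [seq i%:P | i <- w]] = w.
  rewrite -map_comp -[RHS]map_id; apply: eq_map => x /=; by rewrite horner_evalE hornerC.
have hX : horner_eval z 'X = z by rewrite horner_evalE hornerX.
have hb : horner_eval z beta%:P = beta by rewrite horner_evalE hornerC.
rewrite hw2 hX hb => ->; congr (_ * _).
  apply: eq_bigr => i _; rewrite rmorphB /= hX -nth_rmorph hw2.
  by [].
apply: eq_bigr => mu _; rewrite rmorphM g1_map -det_map_mx amxn_map /= hw2 hX hb.
by [].
Qed.

Local Open Scope ring_scope.

Section Fld.
Variable K : fieldType.

Definition vdm (xs : seq K) : K :=
  \prod_(j < size xs) \prod_(k < size xs | (j < k)%N) (xs`_j - xs`_k).

Lemma grothE lam (xs : seq K) beta : groth lam xs beta = \det (amxn (size xs) lam xs beta) / vdm xs.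
Proof. by []. Qed.

Lemma groth1E (mu lam : seq nat) (z beta : K) : groth1 mu lam z beta = g1 mu lam z beta.
Proof. by []. Qed.

Lemma vdm_cons z (w : seq K) :
  vdm (z :: w) = \prod_(k < size w) (z - w`_k) * vdm w.
Proof.
rewrite /vdm /= big_ord_recl; congr (_ * _).
  rewrite big_mkcond big_ord_recl /= mul1r; apply: eq_bigr => k _.
  by rewrite add0n.
apply: eq_bigr => j _.
rewrite big_mkcond big_ord_recl /= mul1r [RHS]big_mkcond.
by apply: eq_bigr => k _; rewrite /bump !add0n ltnS.
Qed.

Lemma vdm_neq0 (w : seq K) : uniq w -> vdm w != 0.
Proof.
move=> hu; apply/prodf_neq0 => j _; apply/prodf_neq0 => k hjk.
rewrite subr_eq0 nth_uniq //; apply/negP => /eqP e.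
by move: hjk; rewrite e ltnn.
Qed.

Lemma one_step lam (z beta : K) (w : seq K) :
  size lam = (size w).+1 -> sorted geq lam -> uniq (z :: w) ->
  groth lam (z :: w) beta =
  \sum_(mu <- bounded_parts (size w) (head 0%N lam)) groth1 lam mu z beta * groth mu w beta.
Proof.
move=> hl hs /andP[hz hu].
rewrite grothE /= (core_field z beta hl hs (erefl _)) vdm_cons.
have hP : \prod_(k < size w) (z - w`_k) != 0.
  apply/prodf_neq0 => k _; rewrite subr_eq0; apply/negP => /eqP e.
  by move: hz; rewrite e mem_nth.
rewrite -mulf_div divff // mul1r big_distrl; apply: eq_bigr => mu _.
by rewrite groth1E grothE mulrA.
Qed.

End Fld.

Local Open Scope ring_scope.

Lemma all_le_head s : sorted geq s -> all (fun x => x <= head 0%N s)%N s.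
Proof.
move=> hs; apply/(all_nthP 0%N) => i hi.
by rewrite -nth0 sorted_geq_nth // hi andbT.
Qed.

Lemma head_le s b : all (fun x => x <= b)%N s -> (head 0%N s <= b)%N.
Proof. by case: s => //= x s /andP[]. Qed.

Lemma bp_filter m b1 b2 : (b1 <= b2)%N ->
  perm_eq (bounded_parts m b1) [seq nu <- bounded_parts m b2 | (head 0%N nu <= b1)%N].
Proof.
move=> hb; apply: uniq_perm; first exact: uniq_bounded_parts.
  exact/filter_uniq/uniq_bounded_parts.
move=> s; rewrite (mem_bounded_parts m b1 s) mem_filter (mem_bounded_parts m b2 s).
case hs: (sorted geq s); rewrite ?andbF //= !andbT.
case: (size s == m); rewrite /= ?andbF //; apply/idP/idP.
- move=> ha; rewrite head_le //=; apply/allP => x hx.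
  by apply: leq_trans hb; apply: (allP ha).
- move=> /andP[hh _]; apply/allP => x hx.
  by apply: leq_trans hh; apply: (allP (all_le_head hs)).
Qed.

Section Fld.
Variable K : fieldType.

Lemma sum_bp_extend (G : seq nat -> K) m b1 b2 : (b1 <= b2)%N ->
  (forall nu, (b1 < head 0%N nu)%N -> G nu = 0) ->
  \sum_(nu <- bounded_parts m b1) G nu = \sum_(nu <- bounded_parts m b2) G nu.
Proof.
move=> hb hG; rewrite (perm_big _ (bp_filter m hb)) big_filter big_mkcond /=.
apply: eq_bigr => nu _; case: ifP => // h; rewrite hG //.
by rewrite ltnNge h.
Qed.

Lemma skew_zero (beta : K) zs mu nu : (head 0%N mu < head 0%N nu)%N ->
  skew_groth mu nu zs beta = 0.
Proof.
elim: zs mu => [|z zs IH] mu h /=.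
  have /negbTE -> : mu != nu by apply/eqP => e; move: h; rewrite e ltnn.
  by [].
rewrite big1_seq // => kap /andP[_]; rewrite (mem_bounded_parts _ _ kap) => /and3P[_ ha _].
rewrite IH ?mulr0 //; apply: leq_ltn_trans h; exact: head_le.
Qed.

End Fld.

Unset Implicit Arguments.

Theorem mainTheorem3 (F : fieldType) (n m : nat) (lam : seq nat)
    (z w : seq F) (beta : F) :
  size z = n -> size w = m -> is_partition (n + m) lam ->
  uniq (z ++ w) ->
  groth lam (z ++ w) beta =
  \sum_(nu <- bounded_parts m (head 0%N lam))
     skew_groth lam nu z beta * groth nu w beta.
Proof.
move=> hz hw; elim: z n lam hz => [|z1 z IH] n lam hz hp hu.
- rewrite /= in hz; subst n; case/andP: hp => /eqP hl hs /=.
  rewrite (bigD1_seq lam) /=; last exact: uniq_bounded_parts.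
    rewrite eqxx mul1r big1 ?addr0 // => nu hnu.
    by rewrite eq_sym (negbTE hnu) mul0r.
  by rewrite (mem_bounded_parts _ _ lam) hl add0n eqxx hs all_le_head.
- rewrite /= in hz; subst n; case/andP: hp => /eqP hl hs.
  rewrite cat_cons one_step //; last by rewrite hl size_cat hw.
  rewrite /= hl size_cat hw addSn /=.
  under eq_big_seq => mu hmu.
    rewrite (IH (size z) mu (erefl _)); last by rewrite cat_cons in hu; case/andP: hu.
    + rewrite (@sum_bp_extend _ _ m (head 0%N mu) (head 0%N lam)); last first.
        by move=> nu h; rewrite skew_zero ?mul0r.
      by move: hmu; rewrite (mem_bounded_parts _ _ mu) => /and3P[_ ha _]; apply: head_le.
      rewrite big_distrr.
    over.
    move: hmu; rewrite (mem_bounded_parts _ _ mu) => /and3P[/eqP hs' _ hso].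
    by rewrite /is_partition hs' eqxx.
  rewrite exchange_big /=; apply: eq_bigr => nu _.
  rewrite big_distrl /=; apply: eq_bigr => mu _.
  by rewrite mulrA.
Qed.
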